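(* Let $e_1,\dots,e_n$ be positive real numbers and let $J_n=\{(x_1,\dots,x_n)\in\mathbb{R}^n: 0\le x_1\le\cdots\le x_n\le1\}$. Then $$\int_{J_n}\det\bigl[x_j^{e_i-1}\bigr]_{1\le i,j\le n}\,dx_1\cdots dx_n=\frac1{e_1\cdots e_n}\prod_{1\le i<j\le n}\frac{e_j-e_i}{e_j+e_i}.$$ *)

(* Defs.v *)
From HB Require Import structures.
From mathcomp Require Import all_boot all_order all_algebra.
From mathcomp Require Import all_classical all_reals all_analysis.
Set Implicit Arguments. Unset Strict Implicit. Unset Printing Implicit Defensive.
Import Order.TTheory GRing.Theory Num.Theory.
Local Open Scope ring_scope.
Local Open Scope ereal_scope.

Fixpoint iint (R : realType) (n : nat) : (n.-tuple R -> \bar R) -> \bar R :=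
  match n with
  | 0 => fun f => f [tuple]
  | k.+1 => fun f =>
      \int[@lebesgue_measure R]_x iint (fun t : k.-tuple R => f [tuple of x :: t])
  end.

Definition Jn (R : realType) (n : nat) : set (n.-tuple R) :=
  [set x | (forall i : 'I_n, (0 <= tnth x i)%R /\ (tnth x i <= 1)%R) /\
           (forall i j : 'I_n, (i <= j)%N -> (tnth x i <= tnth x j)%R)].

Definition powdet (R : realType) (n : nat) (e : 'I_n -> R) (x : n.-tuple R) : R :=
  \det (\matrix_(i < n, j < n) (tnth x j `^ (e i - 1))%R).

(* Main.v *)
Require Import Defs.
From HB Require Import structures.
From mathcomp Require Import all_boot all_order all_algebra.
From mathcomp Require Import all_classical all_reals all_analysis.
From mathcomp Require Import measurable_realfun.
From mathcomp Require Import ring lra.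
Import Order.TTheory GRing.Theory Num.Theory.
Local Open Scope ring_scope.

Module Aux.
Set Implicit Arguments. Unset Strict Implicit. Unset Printing Implicit Defensive.
Import numFieldNormedType.Exports.

Section Alg.
Variable R : comNzRingType.

Lemma prod_lift_cond n (i : 'I_n.+1) (P : pred 'I_n.+1) (g : 'I_n.+1 -> R) :
  \prod_(b < n.+1 | P b) g b =
  (if P i then g i else 1) * \prod_(b < n | P (lift i b)) g (lift i b).
Proof.
rewrite big_mkcond (bigD1_ord i) //=; congr (_ * _).
by rewrite [in RHS]big_mkcond.
Qed.

Lemma ltn_lift n (i : 'I_n.+1) (a b : 'I_n) : (lift i a < lift i b)%N = (a < b)%N.
Proof. by rewrite /= !ltnNge leq_bump2. Qed.

Lemma pair_prod_lift n (i : 'I_n.+1) (f : 'I_n.+1 -> 'I_n.+1 -> R) :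
  \prod_(a < n.+1) \prod_(b < n.+1 | (a < b)%N) f a b =
  (\prod_(a < n) \prod_(b < n | (a < b)%N) f (lift i a) (lift i b)) *
  \prod_(a < n) (if (lift i a < i)%N then f (lift i a) i else f i (lift i a)).
Proof.
have -> : \prod_(a < n.+1) \prod_(b < n.+1 | (a < b)%N) f a b =
   \prod_(b < n | (i < lift i b)%N) f i (lift i b) *
   \prod_(a < n) \prod_(b < n.+1 | (lift i a < b)%N) f (lift i a) b.
  by rewrite (bigD1_ord i) // (prod_lift_cond i) ltnn mul1r.
under [X in _ * X]eq_bigr => a _ do rewrite (prod_lift_cond i (fun b => (lift i a < b)%N)).
under [X in _ * X]eq_bigr => a _ do under eq_bigl => b do rewrite ltn_lift.
rewrite big_split /= mulrA mulrC; congr (_ * _).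
rewrite [X in X * _]big_mkcond -big_split /=; apply: eq_bigr => a _.
have := neq_lift i a; rewrite neq_ltn; case: ltnP => h /=.
  by rewrite ltnNge ltnW // mulr1.
by move=> ->; rewrite mul1r.
Qed.
End Alg.

Section Vdm.
Variable R : comNzRingType.

Definition Dd n (e : 'I_n -> R) := \prod_(i < n) \prod_(j < n | (i < j)%N) (e j - e i).

Lemma Dd_vdm n (e : 'I_n -> R) : Dd e = \det (Vandermonde n (\row_j e j)).
Proof. by rewrite det_Vandermonde /Dd; apply: eq_bigr => i _; apply: eq_bigr => j _; rewrite !mxE. Qed.

Lemma vdm_expand n (e : 'I_n.+1 -> R) (r : {poly R}) : (size r <= n.+1)%N ->
  \sum_(i < n.+1) (-1)^+(n + i) * r.[e i] * Dd (fun k : 'I_n => e (lift i k)) = r`_n * Dd e.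
Proof.
move=> sr.
pose M := \matrix_(k < n.+1, j < n.+1) (if k == ord_max then r.[e j] else e j ^+ k).
pose T := \matrix_(k < n.+1, l < n.+1) (if k == ord_max then r`_l else (k == l)%:R).
have MTV : M = T *m Vandermonde n.+1 (\row_j e j).
  apply/matrixP => k j; rewrite !mxE.
  under eq_bigr do rewrite !mxE.
  case: ifP => hk.
    by rewrite (horner_coef_wide _ sr).
  rewrite (bigD1 k) //= eqxx mul1r big1 ?addr0 // => l /negPf hl.
  by rewrite eq_sym hl mul0r.
have detT : \det T = r`_n.
  rewrite det_trig; last first.
    apply/is_trig_mxP => k l hkl; rewrite mxE.
    have -> : (k == ord_max) = false.
      apply/negbTE; apply/eqP => hk; move: hkl; rewrite hk /=.
      by rewrite ltnNge -ltnS ltn_ord.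
    by case: eqP hkl => // ->; rewrite ltnn.
  rewrite (bigD1 ord_max) //= big1 ?mulr1; first by rewrite mxE eqxx.
  by move=> k /negPf hk; rewrite mxE hk eqxx.
have := congr1 determinant MTV; rewrite det_mulmx detT -Dd_vdm => <-.
rewrite (expand_det_row _ ord_max); apply: eq_bigr => i _.
rewrite !mxE eqxx /cofactor mulrCA -mulrA; congr (_ * (_ * _)).
rewrite Dd_vdm; congr (\det _); apply/matrixP => k l; rewrite !mxE.
have -> : (lift ord_max k == ord_max) = false by rewrite lift_eqF.
by rewrite lift_max.
Qed.
End Vdm.

Section P.
Variable R : realFieldType.
Lemma prod_XsubC_ord n (c : 'I_n -> R) :
  \prod_(a < n) ('X - (c a)%:P) = \prod_(x <- map c (enum 'I_n)) ('X - x%:P).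
Proof. by rewrite big_map big_enum. Qed.

Lemma rpoly_props n (e : 'I_n.+1 -> R) :
  let r := \prod_(a < n.+1) ('X - (- e a)%:P) - \prod_(a < n.+1) ('X - (e a)%:P) in
  (size r <= n.+1)%N /\ r`_n = 2 * \sum_a e a /\
  forall i, r.[e i] = \prod_(a < n.+1) (e i + e a).
Proof.
move=> r; split; last split.
- apply/leq_sizeP => j hj; rewrite coefB !prod_XsubC_ord.
  move: hj; rewrite leq_eqVlt => /orP[/eqP <-|hj].
    have h1 : lead_coef (\prod_(x <- map (fun a => - e a) (enum 'I_n.+1)) ('X - x%:P)) = 1.
      exact: (monicP (monic_prod_XsubC _ predT id)).
    have h2 : lead_coef (\prod_(x <- map e (enum 'I_n.+1)) ('X - x%:P)) = 1.
      exact: (monicP (monic_prod_XsubC _ predT id)).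
    move: h1 h2; rewrite /lead_coef !size_prod_XsubC !size_map -enumT size_enum_ord /=.
    by move=> -> ->; rewrite subrr.
  rewrite !nth_default ?subrr // size_prod_XsubC size_map size_enum_ord //.
- rewrite coefB !prod_XsubC_ord.
  have := coefPn_prod_XsubC (ps := map (fun a => - e a) (enum 'I_n.+1)).
  have := coefPn_prod_XsubC (ps := map e (enum 'I_n.+1)).
  rewrite !size_map -enumT size_enum_ord /= => -> // -> //.
  rewrite !big_map -enumT !big_enum /= sumrN opprK mulr2n mulrDl mul1r.
  by [].
- move=> i; rewrite hornerD hornerN !horner_prod.
  rewrite [X in _ - X](bigD1 i) //= hornerXsubC subrr mul0r subr0.
  by apply: eq_bigr => a _; rewrite hornerXsubC opprK.
Qed.
End P.

Section C.
Variable R : realFieldType.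

Definition Ed n (e : 'I_n -> R) := \prod_(i < n) \prod_(j < n | (i < j)%N) (e j + e i).
Definition Cf n (e : 'I_n -> R) :=
  (\prod_(i < n) e i)^-1 * \prod_(i < n) \prod_(j < n | (i < j)%N) ((e j - e i) / (e j + e i)).

Lemma CfE n (e : 'I_n -> R) : Cf e = Dd e / ((\prod_i e i) * Ed e).
Proof.
rewrite /Cf /Dd /Ed invfM mulrCA; congr (_ * _).
rewrite -prodfV -big_split /=; apply: eq_bigr => i _.
by rewrite -prodfV -big_split.
Qed.

Lemma Ed_gt0 n (e : 'I_n -> R) : (forall i, 0 < e i) -> 0 < Ed e.
Proof.
move=> he; apply: prodr_gt0 => i _; apply: prodr_gt0 => j _.
by rewrite addr_gt0.
Qed.

Lemma Cf_rec n (e : 'I_n.+1 -> R) : (forall i, 0 < e i) ->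
  Cf e = (\sum_i e i)^-1 *
    \sum_(i < n.+1) (-1)^+(i + n) * Cf (fun k : 'I_n => e (lift i k)).
Proof.
move=> he.
have [sr [rn rei]] := rpoly_props e.
set r := (X in size X) in sr rn rei.
have V := vdm_expand e sr.
have S0 : 0 < \sum_i e i.
  rewrite big_ord_recl; apply: (lt_le_trans (he ord0)); rewrite lerDl.
  by apply: sumr_ge0 => k _; exact: ltW.
have P0 : 0 < \prod_i e i by apply: prodr_gt0.
have E0 := Ed_gt0 he.
have key : forall i : 'I_n.+1, Cf (fun k : 'I_n => e (lift i k)) =
   Dd (fun k : 'I_n => e (lift i k)) * \prod_(a < n.+1) (e i + e a) /
     (2 * ((\prod_i e i) * Ed e)).
  move=> i.
  have he' : forall k : 'I_n, 0 < e (lift i k) by [].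
  rewrite CfE.
  have hP : \prod_(a < n.+1) e a = e i * \prod_(k < n) e (lift i k).
    by rewrite (bigD1_ord i).
  have hQ : \prod_(a < n.+1) (e i + e a) = (e i + e i) * \prod_(k < n) (e i + e (lift i k)).
    by rewrite (bigD1_ord i).
  have hE : Ed e = Ed (fun k : 'I_n => e (lift i k)) * \prod_(k < n) (e i + e (lift i k)).
    rewrite /Ed (pair_prod_lift i); congr (_ * _); apply: eq_bigr => k _.
    by case: ifP => // _; rewrite addrC.
  have Q0 : 0 < \prod_(k < n) (e i + e (lift i k)) by apply: prodr_gt0 => k _; rewrite addr_gt0.
  have P0' : 0 < \prod_(k < n) e (lift i k) by apply: prodr_gt0.
  have E0' := Ed_gt0 he'.
  have ei0 := he i.
  rewrite hP hQ hE.
  field.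
  by rewrite (gt_eqF Q0) (gt_eqF E0') (gt_eqF P0') (gt_eqF ei0).
transitivity ((\sum_i e i)^-1 *
    ((\sum_(i < n.+1) (-1) ^+ (n + i) * r.[e i] * Dd (fun k : 'I_n => e (lift i k))) /
      (2 * (\prod_i e i * Ed e)))); last first.
  congr (_ * _); rewrite big_distrl /=; apply: eq_bigr => i _.
  by rewrite key rei addnC; ring.
rewrite V rn CfE.
field.
by rewrite (gt_eqF S0) (gt_eqF P0) (gt_eqF E0).
Qed.
End C.

Section F.
Variable R : realFieldType.
Variable pw : R -> R -> R.

Definition mono n (a x : seq R) : R := \prod_(j < n) pw (nth 0 x j) (nth 0 a j).
Definition evalF n (F : seq (R * seq R)) x := \sum_(p <- F) p.1 * mono n p.2 x.

Fixpoint Pre (s : R) (a : seq R) : R :=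
  match a with [::] => 1 | b :: bs => (s + b)^-1 * Pre (s + b) bs end.

Definition VF (F : seq (R * seq R)) := \sum_(p <- F) p.1 * Pre 0 p.2.

Definition goodF n S (F : seq (R * seq R)) := forall p, p \in F ->
  [/\ size p.2 = n, (forall j, (j < n)%N -> 0 < nth 0 p.2 j) & \sum_(b <- p.2) b = S].

Lemma Pre_rcons s a b : Pre s (rcons a b) = Pre s a * (s + \sum_(c <- a) c + b)^-1.
Proof.
elim: a s => [|c a IH] s /=; first by rewrite big_nil addr0 mul1r mulr1.
by rewrite IH big_cons addrA mulrA.
Qed.

Lemma mono_rcons n a b x : size a = n ->
  mono n.+1 (rcons a b) x = mono n a x * pw (nth 0 x n) b.
Proof.
move=> sa; rewrite /mono big_ord_recr /= nth_rcons sa ltnn eqxx; congr (_ * _).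
by apply: eq_bigr => j _; rewrite nth_rcons sa ltn_ord.
Qed.

Definition pmat n (e : 'I_n -> R) (x : seq R) : 'M[R]_n :=
  \matrix_(i < n, j < n) pw (nth 0 x j) (e i).

Lemma Fdet n (e : 'I_n -> R) : (forall i, 0 < e i) ->
  exists F, [/\ goodF n (\sum_i e i) F,
     (forall x, evalF n F x = \det (pmat e x)) & VF F = Cf e].
Proof.
elim: n e => [|n IH] e he.
  exists [:: (1, [::])]; split.
  - move=> p; rewrite inE => /eqP -> /=; split => //.
    by rewrite big_nil big_ord0.
  - by move=> x; rewrite /evalF big_seq1 /mono big_ord0 mulr1 det_mx00.
  - by rewrite /VF big_seq1 /= mulr1 /Cf !big_ord0 invr1 mulr1.
have: forall i : 'I_n.+1, exists F, [/\ goodF n (\sum_k e (lift i k)) F,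
     (forall x, evalF n F x = \det (pmat (fun k => e (lift i k)) x)) &
     VF F = Cf (fun k => e (lift i k))].
  by move=> i; apply: IH.
move=> /fin_all_exists [Fs HFs].
pose F := flatten [seq [seq ((-1)^+(i + n) * p.1, rcons p.2 (e i)) | p <- Fs i] | i : 'I_n.+1 <- enum 'I_n.+1].
exists F; split.
- move=> p /flattenP [s /mapP [i _ ->] /mapP [q qF ->]] /=.
  have [/(_ q qF) [sq pos sumq] _ _] := HFs i.
  split.
  + by rewrite size_rcons sq.
  + move=> j hj; rewrite nth_rcons sq; case: ltnP => hjn; first exact: pos.
    by rewrite (_ : j == n) ?he //; rewrite eqn_leq hjn andbT -ltnS.
  + by rewrite -cats1 big_cat big_seq1 /= sumq (bigD1_ord i) //= addrC.
- move=> x; rewrite /evalF big_flatten /= big_map big_enum /=.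
  rewrite (expand_det_col _ ord_max); apply: eq_bigr => i _.
  have [good evi _] := HFs i.
  rewrite /cofactor.
  have -> : (row' i (col' ord_max (pmat e x))) = pmat (fun k => e (lift i k)) x.
    by apply/matrixP => k l; rewrite !mxE lift_max.
  rewrite big_map -evi /evalF big_distrr /= big_distrr /=.
  apply: eq_big_seq => q qF.
  have [sq _ _] := good q qF.
  rewrite mono_rcons // !mxE /=.
  ring.
- rewrite /VF big_flatten /= big_map big_enum /= (Cf_rec he) big_distrr /=.
  apply: eq_bigr => i _.
  have [good _ vfi] := HFs i.
  rewrite big_map -vfi /VF !big_distrr /=.
  apply: eq_big_seq => q qF.
  have [sq _ sumq] := good q qF.
  rewrite Pre_rcons /= add0r sumq.
  have -> : \sum_(k < n) e (lift i k) + e i = \sum_i e i by rewrite (bigD1_ord i) //= addrC.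
  ring.
Qed.
End F.

Local Open Scope classical_set_scope.

Section OneD.
Variable R : realType.
Local Notation mu := (@lebesgue_measure R).

Lemma powint_pos (g c : R) : 0 < g -> 0 < c -> c < 1 ->
  (\int[mu]_(x in `[c, 1%R]) (x `^ (g - 1))%:E = ((1 - c `^ g) / g)%:E)%E.
Proof.
move=> g0 c0 c1.
have cont : {within `[c, 1], continuous (fun x : R => x `^ (g - 1))}.
  apply: derivable_within_continuous => x; rewrite in_itv /= => /andP[cx _].
  by apply: derivable_powR; rewrite in_itv /= andbT (lt_le_trans c0).
have contF : {within `[c, 1], continuous (fun x : R => x `^ g / g)}.
  apply: derivable_within_continuous => x; rewrite in_itv /= => /andP[cx _].
  apply: derivableM => //.
  by apply: derivable_powR; rewrite in_itv /= andbT (lt_le_trans c0).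
rewrite (@continuous_FTC2 _ _ (fun x => x `^ g / g)) //.
- by rewrite powR1 -EFinB mulrBl mul1r.
- split.
  + move=> x; rewrite in_itv /= => /andP[cx _].
    apply: derivableM => //.
    by apply: derivable_powR; rewrite in_itv /= andbT (lt_trans c0).
  + by move/continuous_within_itvP : contF => /(_ c1) [].
  + by move/continuous_within_itvP : contF => /(_ c1) [].
- move=> x; rewrite in_itv /= => /andP[cx _].
  have x0 : 0 < x by rewrite (lt_trans c0).
  rewrite derive1E.
  have H := is_derive1_powR g x0.
  have H2 := is_deriveM H (is_derive_cst (g^-1) x 1).
  rewrite [X in 'D_1 X x](_ : _ = (((@powR R)^~ g) * cst g^-1)) //.
  rewrite derive_val /= scaler0 add0r /GRing.scale /=.
  by field; rewrite gt_eqF.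
Qed.

Lemma powint_gt0 (g c : R) : 0 < g -> 0 < c -> c <= 1 ->
  (\int[mu]_(x in `[c, 1%R]) (x `^ (g - 1))%:E = ((1 - c `^ g) / g)%:E)%E.
Proof.
move=> g0 c0; rewrite le_eqVlt => /orP[/eqP ->|c1]; last exact: powint_pos.
by rewrite set_itv1 integral_set1 powR1 subrr mul0r.
Qed.

Lemma mpow (g : R) (D : set R) : measurable_fun D (fun x : R => x `^ g).
Proof. exact: measurable_funS (measurable_powR g). Qed.

Lemma powint (g c : R) : 0 < g -> 0 <= c -> c <= 1 ->
  (\int[mu]_(x in `[c, 1%R]) (x `^ (g - 1))%:E = ((1 - c `^ g) / g)%:E)%E.
Proof.
move=> g0; rewrite le_eqVlt => /orP[/eqP <-|c0]; last exact: powint_gt0.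
move=> _.
have mf : forall D, measurable_fun D (fun x : R => (x `^ (g - 1))%:E).
  by move=> D; apply/measurable_EFinP; exact: mpow.
rewrite -integral_itv_obnd_cbnd //.
pose F := fun n : nat => `[(n.+1%:R)^-1 : R, 1%R]%classic.
have UF : \bigcup_n F n = `]0%R, 1%R]%classic.
  apply/seteqP; split => x /=.
    move=> [n _]; rewrite /F /= !in_itv /= => /andP[hn ->]; rewrite andbT.
    by apply: lt_le_trans hn; rewrite invr_gt0.
  rewrite in_itv /= => /andP[x0 x1].
  exists (Num.truncn x^-1) => //; rewrite /F /= in_itv /= x1 andbT.
  rewrite -[X in _ <= X](invrK x) lef_pV2 ?posrE ?invr_gt0 //.
  by rewrite ltW // real_truncnS_gt // num_real.
have nd : nondecreasing_seq F.
  apply/nondecreasing_seqP => n; rewrite subsetEset /F => x /=; rewrite !in_itv /= => /andP[h ->].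
  rewrite andbT; apply: le_trans h; rewrite lef_pV2 ?posrE //.
  by rewrite ler_nat.
have h1 : ((\int[mu]_(x in F n) (x `^ (g - 1))%:E) @[n --> \oo] -->
    \int[mu]_(x in `]0%R, 1%R]) (x `^ (g - 1))%:E)%E.
  rewrite -UF; apply: ge0_nondecreasing_set_cvg_integral => //.
  - by move=> n; exact: measurable_itv.
  - by move=> n; exact: mf.
  - by move=> n x _; rewrite lee_fin powR_ge0.
have h2 : ((\int[mu]_(x in F n) (x `^ (g - 1))%:E) @[n --> \oo] --> ((1 - 0 `^ g) / g)%:E)%E.
  have hp : (fun n : nat => (harmonic n) `^ g) @ \oo --> (0 : R).
    apply: ((cvg_at_rightP (fun a : R => a `^ g) 0 0).1 (powR_cvg0 g0) harmonic).
    by split; [move=> n; exact: harmonic_gt0 | exact: cvg_harmonic].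
  rewrite powR0 ?gt_eqF //.
  under eq_fun => n do rewrite /F powint_gt0 ?invr_gt0 ?ltr0n ?invf_le1 ?ler1n //.
  apply: cvg_EFin; first by near=> n.
  apply: cvgMl; apply: cvgB; first exact: cvg_cst.
  exact: hp.
rewrite -(cvg_lim _ h1) // (cvg_lim _ h2) //.
Unshelve. all: by end_near.
Qed.

Definition itg (c b bt : R) (x : R) : \bar R :=
  (((c <= x <= 1)%R)%:R * (x `^ (b - 1) * x `^ bt))%:E.

Lemma itg_patch c b bt :
  itg c b bt = (fun x => (x `^ (b - 1) * x `^ bt)%:E) \_ `[c, 1%R].
Proof.
apply/funext => x; rewrite /itg /patch /= mem_setE in_itv /=.
by case: ifP => _; rewrite ?mul1r ?mul0r.
Qed.

Lemma itg_meas c b bt : measurable_fun setT (itg c b bt).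
Proof.
rewrite itg_patch; apply/(measurable_restrictT _ _).1; first exact: measurable_itv.
apply/measurable_EFinP; apply: measurable_funM; exact: mpow.
Qed.

Lemma itg_ge0 c b bt x : (0 <= itg c b bt x)%E.
Proof. by rewrite /itg lee_fin mulr_ge0 ?mulr_ge0 ?powR_ge0. Qed.

Lemma itg_int c b bt : 0 < b -> 0 <= bt -> 0 <= c -> c <= 1 ->
  (\int[mu]_x itg c b bt x = ((1 - c `^ (b + bt)) / (b + bt))%:E)%E.
Proof.
move=> b0 bt0 c0 c1.
rewrite itg_patch -integral_mkcond.
have g0 : 0 < b + bt by lra.
rewrite -powint //.
apply: eq_integral_itv_bounded.
- apply: measurable_funM; exact: mpow.
- exact: mpow.
- move=> x; rewrite in_itv /= => /andP[cx _].
  have x0 : x != 0 by rewrite gt_eqF // (le_lt_trans c0).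
  by rewrite -powRD ?x0 ?implybT // addrAC.
Qed.

Lemma itg_integrable c b bt : 0 < b -> 0 <= bt -> 0 <= c -> c <= 1 ->
  mu.-integrable setT (itg c b bt).
Proof.
move=> b0 bt0 c0 c1; apply/integrableP; split; first exact: itg_meas.
under eq_integral do rewrite gee0_abs ?itg_ge0 //.
by rewrite itg_int // ltry.
Qed.

Lemma int_sum_seq (I : eqType) (s : seq I) (f : I -> R -> \bar R) :
  (forall i, i \in s -> mu.-integrable setT (f i)) ->
  mu.-integrable setT (fun x => (\sum_(i <- s) f i x)%E) /\
  (\int[mu]_x (\sum_(i <- s) f i x) = \sum_(i <- s) \int[mu]_x f i x)%E.
Proof.
elim: s => [|a s IH] hs.
  split.
    apply/integrableP; split; first by under eq_fun do rewrite big_nil; exact: measurable_cst.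
    by under eq_integral do rewrite big_nil abse0; rewrite integral0 ltry.
  by under eq_integral do rewrite big_nil; rewrite integral0 big_nil.
have [i1 e1] : mu.-integrable setT (fun x => (\sum_(i <- s) f i x)%E) /\
  (\int[mu]_x (\sum_(i <- s) f i x) = \sum_(i <- s) \int[mu]_x f i x)%E.
  by apply: IH => i hi; apply: hs; rewrite inE hi orbT.
have ia := hs a (mem_head a s).
split.
  under eq_fun do rewrite big_cons.
  exact: (integrableD _ ia i1).
under eq_integral do rewrite big_cons.
by rewrite integralD // big_cons e1.
Qed.
End OneD.

Section LPs.
Variable R : realType.

Definition integ (b : R) (G : seq (R * R)) : seq (R * R) :=
  (\sum_(q <- G) q.1 / (b + q.2), 0) :: [seq (- (q.1 / (b + q.2)), b + q.2) | q <- G].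

Fixpoint LP (a : seq R) : seq (R * R) :=
  match a with [::] => [:: (1, 0)] | b :: bs => integ b (LP bs) end.

Definition ev (G : seq (R * R)) (c : R) := \sum_(q <- G) q.1 * c `^ q.2.

Definition Mom (G : seq (R * R)) (b : R) := \sum_(q <- G) q.1 / (b + q.2).

Definition posl (a : seq R) := all (fun b => 0 < b) a.

Lemma LP_ge0 a : posl a -> forall q, q \in LP a -> 0 <= q.2.
Proof.
elim: a => [|b a IH] /=.
  by move=> _ q; rewrite inE => /eqP ->.
move=> /andP[b0 pa] q; rewrite inE => /orP[/eqP -> //|/mapP [q' q'in ->] /=].
by apply: addr_ge0; [exact: ltW | exact: (IH pa q' q'in)].
Qed.

Lemma Mom_LP bs : posl bs -> forall b, 0 < b -> Mom (LP bs) b = b^-1 * Pre b bs.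
Proof.
elim: bs => [|b' bs IH] /=.
  by move=> _ b b0; rewrite /Mom big_seq1 /= addr0 mul1r mulr1.
move=> /andP[b'0 pbs] b b0.
have h := LP_ge0 pbs.
rewrite /Mom /integ big_cons big_map /= addr0.
rewrite -IH ?addr_gt0 // /Mom.
rewrite mulr_suml mulr_sumr -big_split /=; apply: eq_big_seq => q qin.
have q2 := h q qin.
have h1 : b' + q.2 != 0 by rewrite gt_eqF //; lra.
have h2 : b + (b' + q.2) != 0 by rewrite gt_eqF //; lra.
have h3 : b + b' + q.2 != 0 by rewrite gt_eqF //; lra.
have h4 : b != 0 by rewrite gt_eqF.
field.
by rewrite !gt_eqF //=; lra.
Qed.

Lemma ev_integ b G c : 0 <= c -> ev (integ b G) c =
  \sum_(q <- G) q.1 * ((1 - c `^ (b + q.2)) / (b + q.2)).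
Proof.
move=> c0; rewrite /ev /integ big_cons big_map /= powRr0 mulr1.
rewrite -big_split /=; apply: eq_bigr => q _; ring.
Qed.

Lemma ev_LP0 a : posl a -> ev (LP a) 0 = Pre 0 a.
Proof.
case: a => [|b bs] /=.
  by move=> _; rewrite /ev big_seq1 /= powRr0 mulr1.
move=> /andP[b0 pbs].
rewrite /ev /integ big_cons big_map /= powRr0 mulr1.
rewrite [X in _ + X]big1_seq ?addr0; last first.
  move=> q /andP[_ qin] /=; rewrite powR0 ?mulr0 //.
  have q2 := LP_ge0 pbs qin; rewrite gt_eqF //; lra.
rewrite add0r -[X in X = _]/(Mom (LP bs) b) Mom_LP //.
Qed.
End LPs.

Section Chain.
Variable R : realType.
Local Notation mu := (@lebesgue_measure R).

Definition pwr (y a : R) := y `^ (a - 1).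
Definition chainb (c : R) (t : seq R) := path <=%R c t && (last c t <= 1).

Lemma iint0 m : iint (fun _ : m.-tuple R => 0%E) = 0%E.
Proof.
elim: m => [|m IH] //=.
under eq_integral do rewrite IH.
exact: integral0.
Qed.

Lemma path_last (c : R) t : path <=%R c t -> c <= last c t.
Proof.
elim: t c => [|y t IH] c //= /andP[cy pt].
exact: le_trans cy (IH _ pt).
Qed.

Lemma mono_cons m (a : seq R) (x : R) (t : seq R) :
  mono pwr m.+1 a (x :: t) = pwr x (head 0 a) * mono pwr m (behead a) t.
Proof.
rewrite /mono big_ord_recl /= nth0; congr (_ * _).
by apply: eq_bigr => j _; rewrite /= nth_behead.
Qed.

Lemma chain m : forall (c : R) (F : seq (R * seq R)), 0 <= c -> c <= 1 ->
  (forall p, p \in F -> size p.2 = m /\ posl p.2) ->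
  iint (fun t : m.-tuple R => ((chainb c t)%:R * evalF pwr m F t)%:E) =
  (\sum_(p <- F) p.1 * ev (LP p.2) c)%:E.
Proof.
elim: m => [|m IH] c F c0 c1 hF.
  rewrite /= /chainb /= c1 mul1r; congr EFin.
  apply: eq_big_seq => p pF; have [sp _] := hF p pF.
  move: sp; case: p pF => w [|//] _ _ /=.
  by rewrite /mono big_ord0 /ev big_seq1 /= powRr0 !mulr1.
cbn [iint].
transitivity (\int[mu]_x
   (((c <= x <= 1)%R)%:R * \sum_(p <- F) p.1 * pwr x (head 0 p.2) * ev (LP (behead p.2)) x)%:E)%E.
  apply: eq_integral => x _.
  pose F' := [seq (p.1 * pwr x (head 0 p.2), behead p.2) | p <- F].
  have hev : forall t : seq R, evalF pwr m.+1 F (x :: t) = evalF pwr m F' t.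
    move=> t; rewrite /evalF big_map; apply: eq_bigr => p _.
    by rewrite mono_cons /= mulrA.
  case: (boolP ((c <= x <= 1)%R)) => hx.
    have /andP[cx x1] := hx.
    rewrite (_ : (fun t : m.-tuple R => _) =
       (fun t : m.-tuple R => ((chainb x t)%:R * evalF pwr m F' t)%:E)); last first.
      apply/funext => t /=; rewrite hev; congr (EFin (_ * _)).
      by rewrite /chainb /= cx.
    have x0 : 0 <= x by exact: le_trans c0 cx.
    have hF' : forall p', p' \in F' -> size p'.2 = m /\ posl p'.2.
      move=> p' /mapP [p pF ->] /=; have [sp pp] := hF p pF.
      split; first by rewrite size_behead sp.
      by move: pp; case: (p.2) => //= b bs /andP[].
    rewrite (IH x F' x0 x1 hF') /= mul1r big_map; congr EFin; apply: eq_bigr => p _ /=.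
  rewrite (_ : false%:R = 0 :> R) // mul0r.
  rewrite (_ : (fun t : m.-tuple R => _) = (fun _ => 0%E)); first exact: iint0.
  apply/funext => t /=.
  rewrite /chainb /=.
  case: (boolP (c <= x)) => cx /=; last by rewrite mul0r.
  have x1 : ~~ (x <= 1) by move: hx; rewrite cx.
  case: (boolP (path <=%R x t)) => pt /=; last by rewrite mul0r.
  have := path_last pt => xl.
  have -> : (last x t <= 1) = false.
    apply/negbTE; apply: contra x1 => l1; exact: le_trans xl l1.
  by rewrite mul0r.
transitivity (\int[mu]_x (\sum_(p <- F) \sum_(q <- LP (behead p.2))
    ((p.1 * q.1)%:E * itg c (head 0%R p.2) q.2 x)))%E.
  apply: eq_integral => x _.
  rewrite -[RHS](_ : (\sum_(p <- F) \sum_(q <- LP (behead p.2))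
     (p.1 * q.1 * ((c <= x <= 1)%R%:R * (x `^ (head 0 p.2 - 1) * x `^ q.2))))%:E = _); last first.
    rewrite -sumEFin; apply: eq_bigr => p _; rewrite -sumEFin; apply: eq_bigr => q _.
    by rewrite /itg EFinM.
  congr EFin.
  rewrite mulr_sumr; apply: eq_bigr => p _; rewrite /ev !mulr_sumr; apply: eq_bigr => q _.
  by rewrite /pwr; ring.
have hp : forall p, p \in F -> [/\ 0 < head 0 p.2, posl (behead p.2) & p.2 = head 0 p.2 :: behead p.2].
  move=> p pF; have [sp pp] := hF p pF.
  by move: sp pp; case: (p.2) => //= b bs _ /andP[].
have hin : forall p, p \in F -> mu.-integrable setT (fun x => \sum_(q <- LP (behead p.2))
    ((p.1 * q.1)%:E * itg c (head 0%R p.2) q.2 x))%E.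
  move=> p pF; have [a0 pt _] := hp p pF.
  have H : forall q, q \in LP (behead p.2) -> mu.-integrable setT
      (fun x => ((p.1 * q.1)%:E * itg c (head 0%R p.2) q.2 x))%E.
    move=> q qin.
    apply: integrableZl => //; apply: itg_integrable => //.
    exact: (LP_ge0 pt qin).
  exact: (int_sum_seq H).1.
rewrite (int_sum_seq hin).2 -sumEFin; apply: eq_big_seq => p pF.
have [a0 pt p2] := hp p pF.
have H : forall q, q \in LP (behead p.2) -> mu.-integrable setT
    (fun x => ((p.1 * q.1)%:E * itg c (head 0%R p.2) q.2 x))%E.
  move=> q qin.
  apply: integrableZl => //; apply: itg_integrable => //.
  exact: (LP_ge0 pt qin).
rewrite (int_sum_seq H).2.
rewrite [in RHS]p2 /= ev_integ // mulr_sumr -sumEFin; apply: eq_big_seq => q qin.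
rewrite integralZl //; last exact: itg_integrable (LP_ge0 pt qin) c0 c1.
rewrite itg_int //; last exact: (LP_ge0 pt qin).
by rewrite -EFinM mulrA.
Qed.
End Chain.

Lemma J_chain (R : realType) n (x : n.-tuple R) : @Jn R n x <-> chainb 0 x.
Proof.
have sx : size x = n := size_tuple x.
have hS : forall (hs : sorted <=%R (0 :: (x : seq R))) i j, (i <= j)%N -> (j <= n)%N ->
    nth 0 (0 :: (x : seq R)) i <= nth 0 (0 :: (x : seq R)) j.
  move=> hs i j ij jn.
  apply: (@sorted_leq_nth _ <=%R le_trans lexx 0 (0 :: (x : seq R)) hs) => //.
  - by rewrite inE /= sx ltnS (leq_trans ij jn).
  - by rewrite inE /= sx ltnS.
split.
- move=> [H1 H2]; apply/andP; split.
  + apply/(pathP 0) => i; rewrite sx => hi.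
    case: i hi => [|k] hk /=.
      by have [] := H1 (Ordinal hk); rewrite (tnth_nth 0).
    have hk' : (k < n)%N by apply: ltnW.
    by have := H2 (Ordinal hk') (Ordinal hk) (leqnSn k); rewrite !(tnth_nth 0).
  + rewrite (last_nth 0) sx; move: H1; clear -sx.
    case: n x sx => [|n] x sx H1 //=.
    by have [] := H1 (Ordinal (ltnSn n)); rewrite (tnth_nth 0).
- move=> /andP[hp hl].
  have hs : sorted <=%R (0 :: (x : seq R)) by [].
  have hl' : nth 0 (0 :: (x : seq R)) n <= 1 by move: hl; rewrite (last_nth 0) sx.
  split.
  + move=> i; rewrite (tnth_nth 0); split.
      by have := hS hs 0%N i.+1 (leq0n _) (ltn_ord i).
    apply: le_trans hl'.
    by have := hS hs i.+1 n (ltn_ord i) (leqnn n).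
  + move=> i j ij; rewrite !(tnth_nth 0).
    by have := hS hs i.+1 j.+1 ij (ltn_ord j).
Qed.


End Aux.
Import Aux.

Theorem proposition2p2p2 (R : realType) (n : nat) (e : 'I_n -> R)
    (he : forall i, 0 < e i) :
  iint (fun x : n.-tuple R => ((\1_(@Jn R n) x) * powdet e x)%:E) =
  ((\prod_(i < n) e i)^-1 *
   \prod_(i < n) \prod_(j < n | (i < j)%N) ((e j - e i) / (e j + e i)))%:E.
Proof.
have [F [good evF vF]] := Fdet (@pwr R) he.
rewrite (_ : (fun x => _) = (fun x : n.-tuple R => ((chainb 0 x)%:R * evalF (@pwr R) n F x)%:E)).
  rewrite chain //; last first.
    move=> p pF; have [sp pos _] := good p pF; split => //.
    apply/(all_nthP 0) => j; rewrite sp; exact: pos.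
  congr EFin; rewrite -[RHS]/(Cf e) -vF /VF; apply: eq_big_seq => p pF.
  have [sp pos _] := good p pF.
  rewrite ev_LP0 //; apply/(all_nthP 0) => j; rewrite sp; exact: pos.
apply/funext => x; congr EFin; congr (_ * _).
  rewrite indicE (_ : (x \in @Jn R n) = chainb 0 x) //.
  have [h|h] := boolP (chainb 0 x); rewrite ?h.
    by apply: mem_set; apply/J_chain.
  by apply/negbTE/negP => /set_mem/J_chain; rewrite (negbTE h).
rewrite evF /powdet /pmat; congr (\det _); apply/matrixP => i j; rewrite !mxE.
by rewrite /pwr (tnth_nth 0).
Qed.
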